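(* Every finite ordinal potential game has at least one strongly maximal equilibrium.
   Context: A finite strategic-form game $\Gamma=(I,(S_i)_{i\in I},(u_i)_{i\in I})$ has finite player set $I$, finite nonempty strategy sets $S_i$, utilities $u_i:S\to\mathbb{R}$, $S=\prod_i S_i$; $(s_i',s_{-i})$ denotes $s$ with player $i$'s strategy replaced by $s_i'$. A pure Nash equilibrium is $s\in S$ with $u_i(s)\ge u_i(s_i',s_{-i})$ for all $i$ and $s_i'\in S_i$. A function $P:S\to\mathbb{R}$ is an ordinal potential if for all $i$, $a,b\in S_i$, $\sigma_{-i}\in S_{-i}$: $u_i(a,\sigma_{-i})>u_i(b,\sigma_{-i})\iff P(a,\sigma_{-i})>P(b,\sigma_{-i})$; $\Gamma$ is an ordinal potential game if one exists. The ordinal deployment graph of $\Gamma$ has vertex set $S$ and an arc $(s,s')$, $s'\neq s$, iff $s'=(s_i',s_{-i})$ for some $i$ with $u_i(s')\ge u_i(s)$. Define $s\succeq s'$ iff there is a directed path (possibly of length $0$) in this graph from $s'$ to $s$, and $s\succ s'$ iff $s\succeq s'$ and not $s'\succeq s$. A strongly maximal state is an $s^*$ with no $s$ satisfying $s\succ s^*$. Two states communicate if each is reachable from the other by a directed path. A strongly maximal equilibrium is a strongly maximal state $s$ such that every state communicating with $s$ (including $s$) is a pure Nash equilibrium. *)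

(* Defs.v *)
From mathcomp Require Import all_boot.
From Stdlib Require Import Reals Relations.
Set Implicit Arguments.
Unset Strict Implicit.
Unset Printing Implicit Defensive.

Open Scope R_scope.

Section Game.
Variables (I : finType) (S : I -> finType).

Definition profile := {dffun forall i : I, S i}.

Definition unilateral (i : I) (s t : profile) : Prop :=
  forall j : I, j <> i -> t j = s j.

Variable u : I -> profile -> R.

Definition is_nash (s : profile) : Prop :=
  forall (i : I) (t : profile), unilateral i s t -> u i t <= u i s.

Definition ordinal_potential (P : profile -> R) : Prop :=
  forall (i : I) (a b : profile), unilateral i b a ->
    (u i a > u i b <-> P a > P b).

Definition is_ordinal_potential_game : Prop :=
  exists P : profile -> R, ordinal_potential P.

Definition dep_arc (s s' : profile) : Prop :=
  s' <> s /\ exists i : I, unilateral i s s' /\ u i s' >= u i s.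

Definition reach : relation profile := clos_refl_trans profile dep_arc.

Definition succeq (s s' : profile) : Prop := reach s' s.
Definition succ (s s' : profile) : Prop := succeq s s' /\ ~ succeq s' s.

Definition strongly_maximal (s : profile) : Prop :=
  ~ exists t : profile, succ t s.

Definition communicate (s t : profile) : Prop := reach s t /\ reach t s.

Definition strongly_maximal_equilibrium (s : profile) : Prop :=
  strongly_maximal s /\ forall t : profile, communicate s t -> is_nash t.

End Game.

(* Main.v *)
Require Import Defs.
From mathcomp Require Import all_boot.
From Stdlib Require Import Reals Relations.
From Stdlib Require Import ClassicalEpsilon ClassicalDescription Lra Lia.

Section Aux.
Variables (I : finType) (S : I -> finType) (u : I -> profile S -> R).

Lemma unil_sym i (s t : profile S) : unilateral i s t -> unilateral i t s.
Proof. move=> H j Hj; by rewrite H. Qed.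

Lemma reach_mono (P : profile S -> R) : ordinal_potential u P ->
  forall s t, reach u s t -> (P s <= P t)%R.
Proof.
move=> HP s t; elim=> [x y [_ [i [Hu Hge]]]| x | x y z _ H1 _ H2]; last lra; last lra.
destruct (Rle_or_lt (P x) (P y)) as [h|h]; first by [].
have := proj2 (HP i x y (unil_sym _ _ _ Hu)) h. lra.
Qed.

Definition rb (s t : profile S) : bool :=
  if excluded_middle_informative (reach u s t) then true else false.

Lemma rbP s t : reflect (reach u s t) (rb s t).
Proof. rewrite /rb; case: excluded_middle_informative => h; by constructor. Qed.

Definition RS s : {set profile S} := [set t | rb s t].
End Aux.

Theorem corollary1 (I : finType) (S : I -> finType)
  (S_nonempty : forall i : I, inhabited (S i))
  (u : I -> profile S -> R) :
  is_ordinal_potential_game u ->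
  exists s : profile S, strongly_maximal_equilibrium u s.
Proof.
move=> [P HP].
pose s0 : profile S := finfun (fun i => epsilon (S_nonempty i) (fun _ => True)).
case: (arg_minnP (fun s => #|RS _ _ u s|) (isT : predT s0)) => s _ Hmin.
have key : forall t, reach u s t -> ~ reach u t s -> False.
  move=> t Hst Hts.
  have sub : RS _ _ u t \proper RS _ _ u s.
    apply/properP; split.
      apply/subsetP => x; rewrite !inE => /(rbP _ _ u) Htx; apply/(rbP _ _ u).
      exact: rt_trans Hst Htx.
    exists s; rewrite !inE; first by apply/(rbP _ _ u); apply: rt_refl.
    by apply/(rbP _ _ u).
  have := proper_card sub; rewrite ltnNge; by rewrite Hmin.
exists s; split.
  move=> [t [Hst Hts]]; exact: key t Hst Hts.
move=> t [Hst Hts] i t' Hu.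
destruct (Rle_or_lt (u i t') (u i t)) as [h|h]; first by [].
exfalso.
have Ht't : t' <> t by move=> E; rewrite E in h; lra.
have arc : reach u t t' by apply: rt_step; split => //; exists i; split => //; lra.
have Hpt : (P t' > P t)%R := proj1 (HP i t' t Hu) h.
apply: (key t' (rt_trans _ _ _ _ _ Hst arc)) => Hts'.
have := reach_mono _ _ _ _ HP _ _ (rt_trans _ _ _ _ _ Hts' Hst). lra.
Qed.
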